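(* A finite simple graph $G=(V,E)$ with at least one edge is uniformly dense if and only if $c(E\setminus A)-c(E)\le |A|/\rho(G)$ for all proper subsets $A\subsetneq E$.
   Context: For $A\subseteq E$, $c(A)$ is the number of connected components of the graph $(V,A)$, $\operatorname{rank}(A)=|V|-c(A)$, $\rho(A)=|A|/\operatorname{rank}(A)$ for nonempty $A$, and $\rho(G)=\rho(E)$. $G$ is uniformly dense if $\rho(A)\le\rho(G)$ for all nonempty $A\subseteq E$. *)

(* Defs.v *)
(* A finite simple graph G = (V,E) is given by a finite vertex
   type T (V = all of T) and an edge set E : {set {set T}} whose elements are
   2-element subsets of T. *)
From mathcomp Require Import all_boot all_order all_algebra.
Set Implicit Arguments. Unset Strict Implicit. Unset Printing Implicit Defensive.
Import Order.TTheory GRing.Theory Num.Theory.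

Section Graphs.
Variable T : finType.

Definition simple_edges (E : {set {set T}}) : Prop :=
  forall f, f \in E -> #|f| = 2.

Definition adj (A : {set {set T}}) : rel T :=
  fun x y => (x != y) && ([set x; y] \in A).

Definition ncomp (A : {set {set T}}) : nat :=
  n_comp (connect (adj A)) [set: T].

Definition grank (A : {set {set T}}) : nat := #|T| - ncomp A.

Definition rho (A : {set {set T}}) : rat := (#|A|%:R / (grank A)%:R)%R.

Definition uniformly_dense (E : {set {set T}}) : Prop :=
  forall A : {set {set T}}, A \subset E -> A != set0 -> (rho A <= rho E)%R.

End Graphs.

(* Main.v *)
Require Import Defs.
From mathcomp Require Import all_boot all_order all_algebra.
Import Order.TTheory GRing.Theory Num.Theory.
From mathcomp Require Import ring lra.
Lemma ncomp_le (T : finType) (A : {set {set T}}) : ncomp A <= #|T|.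
Proof. exact: max_card. Qed.

Lemma ncomp_lt (T : finType) (A : {set {set T}}) :
  simple_edges A -> A != set0 -> ncomp A < #|T|.
Proof.
move=> hs /set0Pn [f fA].
have /cards2P [x [y [xy fxy]]] : #|f| == 2 by apply/eqP; exact: hs.
have sym0 : connect_sym (adj A).
  apply: sym_connect_sym => u v; by rewrite /adj eq_sym setUC.
have cxy : connect (adj A) x y by apply: connect1; rewrite /adj xy -fxy fA.
have sym : connect_sym (connect (adj A)) by apply: sym_connect_sym.
have rxy : fingraph.root (connect (adj A)) x = fingraph.root (connect (adj A)) y.
  by apply/eqP; rewrite (root_connect sym); apply: connect1.
set P := predI (roots (connect (adj A))) (mem [set: T]).
have [z zP] : exists z, z \notin P.
  case rx: (roots (connect (adj A)) x); last by exists x; rewrite inE /= rx.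
  exists y; rewrite inE /= /roots -rxy (eqP rx) (negbTE xy) //=.
rewrite /ncomp /n_comp_mem -/P -(cardC P).
have : 0 < #|[predC P]| by apply/card_gt0P; exists z; rewrite inE.
move=> h; rewrite -[X in X < _](addn0 #|P|) ltn_add2l //.
Qed.
Local Open Scope ring_scope.
Lemma alg (b e rb re : rat) : 0 < rb -> 0 < re -> 0 < e ->
  (b / rb <= e / re) <-> (re - rb <= (e - b) / (e / re)).
Proof.
move=> hrb hre he.
have -> : (b / rb <= e / re) = (b * re <= e * rb).
  by rewrite ler_pdivrMr // mulrAC ler_pdivlMr.
have -> : (e - b) / (e / re) = (e - b) * re / e.
  by rewrite invf_div mulrA.
rewrite ler_pdivlMr //.
split => h; nra.
Qed.

Lemma key (T : finType) (E B : {set {set T}}) :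
  simple_edges E -> E != set0 -> B \subset E -> B != set0 ->
  (rho B <= rho E) <->
  ((ncomp B)%:R - (ncomp E)%:R <= #|E :\: B|%:R / rho E).
Proof.
move=> hs hne sBE nB.
have hsB : simple_edges B by move=> f fB; apply: hs; exact: (subsetP sBE).
have ltB := @ncomp_lt _ _ hsB nB.
have ltE := @ncomp_lt _ _ hs hne.
rewrite /rho /grank.
have -> : #|E :\: B| = (#|E| - #|B|)%N by rewrite cardsD (setIidPr sBE).
rewrite (natrB _ (subset_leq_card sBE)) (natrB _ (ltnW ltB)) (natrB _ (ltnW ltE)).
have -> : ((ncomp B)%:R - (ncomp E)%:R : rat) =
   ((#|T|%:R - (ncomp E)%:R) - (#|T|%:R - (ncomp B)%:R)) by ring.
apply: alg.
- by rewrite subr_gt0 ltr_nat.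
- by rewrite subr_gt0 ltr_nat.
- by rewrite ltr0n card_gt0.
Qed.

Theorem proposition3p12 (T : finType) (E : {set {set T}})
  (hsimple : simple_edges E) (hne : E != set0) :
  uniformly_dense E <->
  (forall A : {set {set T}}, A \proper E ->
     ((ncomp (E :\: A))%:R - (ncomp E)%:R : rat) <= #|A|%:R / rho E).
Proof.
have DD : forall A : {set {set T}}, A \subset E -> E :\: (E :\: A) = A.
  by move=> A sAE; rewrite setDDr setDv set0U; apply/setIidPr.
split.
- move=> hud A /properP [sAE [a aE aA]].
  have nB : E :\: A != set0 by apply/set0Pn; exists a; rewrite inE aA.
  have := @key _ E (E :\: A) hsimple hne (subsetDl _ _) nB.
  rewrite DD // => [[h _]]; apply: h; apply: hud => //; exact: subsetDl.
- move=> h A sAE nA.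
  have := @key _ E A hsimple hne sAE nA => [[_ h2]]; apply: h2.
  have pr : E :\: A \proper E.
    apply/properP; split; first exact: subsetDl.
    case/set0Pn: nA => a aA; exists a; first exact: (subsetP sAE).
    by rewrite inE aA.
  by have := h _ pr; rewrite DD.
Qed.
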